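(* Under Assumptions 1-MP, 2-MP(a) and 3-MP of the multi-period setup below (with $\frac{1}{\mathcal{T}}\sum_{t=1}^{\mathcal{T}}\mathbb{E}[\ddot W_t^2]>0$), $$\beta^{twfe}=\sum_{g\in\mathcal{G}}w^{g,within}(g)\,\delta^{WITHIN}(g)+\sum_{g\in\mathcal{G}}\sum_{k\in\mathcal{G},k>g}\Big\{w^{g,post}(g,k)\,\delta^{MID,PRE}(g,k)+w^{k,post}(g,k)\,\delta^{POST,MID}(g,k)+w^{long}(g,k)\,\delta^{POST,PRE}(g,k)\Big\}.$$ Moreover all weights are nonnegative and $\sum_{g}w^{g,within}(g)+\sum_{g}\sum_{k>g}\{w^{g,post}(g,k)+w^{k,post}(g,k)+w^{long}(g,k)\}=1$.
   Context: Multi-period setup. Periods $t=1,\dots,\mathcal{T}$. Each unit has a timing group $G\in\mathcal{G}\subseteq\{2,\dots,\mathcal{T}+1\}$ ($G=\mathcal{T}+1$ means never treated) and a dose $D\ge0$, with $D=0$ exactly for never-treated units and $D\in\mathcal{D}_+$ for units with $G\le\mathcal{T}$. Potential outcomes $Y_t(g,d)$; $Y_t(0):=Y_t(\mathcal{T}+1,0)$. $W_t:=D\,\mathbf{1}\{t\ge G\}$. Observed $Y_t=Y_t(0)\mathbf{1}\{t<G\}+Y_t(G,D)\mathbf{1}\{t\ge G\}$; finite second moments. 1-MP: $\{Y_{i1},\dots,Y_{i\mathcal{T}},D_i,G_i\}$ i.i.d. 2-MP(a): support of $D$ is $\{0\}\cup\mathcal{D}_+$, $\mathcal{D}_+\subset(0,\infty)$,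 $\mathbb{P}(D=0)>0$, every $d\in\mathcal{D}_+$ is in the support of $D\mid G=g$ for $g\le\mathcal{T}$. 3-MP: (a) $Y_t(g,d)=Y_t(0)$ for $t<g$; (b) $W_1=0$ and $W_{t-1}=d\Rightarrow W_t=d$. TWFE: $\bar W_i:=\frac1{\mathcal{T}}\sum_tW_{it}$, $\ddot W_{it}:=(W_{it}-\bar W_i)-(\mathbb{E}[W_t]-\frac1{\mathcal{T}}\sum_s\mathbb{E}[W_s])$, $\beta^{twfe}:=\frac{\frac1{\mathcal{T}}\sum_t\mathbb{E}[Y_{t}\ddot W_{t}]}{\frac1{\mathcal{T}}\sum_t\mathbb{E}[\ddot W_t^2]}$ (the population coefficient of $W_{it}$ in $Y_{it}=\theta_t+\eta_i+\beta W_{it}+v_{it}$). Notation: $p_g:=\mathbb{P}(G=g)$; $\bar G_g:=(\mathcal{T}-g+1)/\mathcal{T}$ (so $\bar G_{\mathcal{T}+1}=0$). For $t_1\le t_2$, $\bar Y^{(t_1,t_2)}:=\frac1{t_2-t_1+1}\sum_{t=t_1}^{t_2}Y_t$; for $g<k$: $\bar Y^{PRE(g)}:=\bar Y^{(1,g-1)}$, $\bar Y^{MID(g,k)}:=\bar Y^{(g,k-1)}$, $\bar Y^{POST(k)}:=\bar Y^{(k,\mathcal{T})}$. Comparisons: $\delta^{WITHIN}(g):=\mathrm{cov}(\bar Y^{POST(g)}-\bar Y^{PRE(g)},D\mid G=g)/\mathrm{var}(D\mid G=g)$; $\delta^{MID,PRE}(g,k):=\big(\mathbb{E}[\bar Y^{MID(g,k)}-\bar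 Y^{PRE(g)}\mid G=g]-\mathbb{E}[\bar Y^{MID(g,k)}-\bar Y^{PRE(g)}\mid G=k]\big)/\mathbb{E}[D\mid G=g]$; $\delta^{POST,MID}(g,k):=\big(\mathbb{E}[\bar Y^{POST(k)}-\bar Y^{MID(g,k)}\mid G=k]-\mathbb{E}[\bar Y^{POST(k)}-\bar Y^{MID(g,k)}\mid G=g]\big)/\mathbb{E}[D\mid G=k]$; $\delta^{POST,PRE}(g,k):=\big(\mathbb{E}[\bar Y^{POST(k)}-\bar Y^{PRE(g)}\mid G=g]-\mathbb{E}[\bar Y^{POST(k)}-\bar Y^{PRE(g)}\mid G=k]\big)/(\mathbb{E}[D\mid G=g]-\mathbb{E}[D\mid G=k])$. Weights, with $V:=\frac1{\mathcal{T}}\sum_t\mathbb{E}[\ddot W_t^2]$: $w^{g,within}(g):=\mathrm{var}(D\mid G=g)(1-\bar G_g)\bar G_g\,p_g/V$; $w^{g,post}(g,k):=\mathbb{E}[D\mid G=g]^2(1-\bar G_g)(\bar G_g-\bar G_k)\,p_gp_k/V$; $w^{k,post}(g,k):=\mathbb{E}[D\mid G=k]^2\bar G_k(\bar G_g-\bar G_k)\,p_gp_k/V$; $w^{long}(g,k):=(\mathbb{E}[D\mid G=g]-\mathbb{E}[D\mid G=k])^2\bar G_k(1-\bar G_g)\,p_gp_k/V$. (Note $p_gp_k=(p_g+p_k)^2p_{g|\{g,k\}}(1-p_{g|\{g,k\}})$ with $p_{g|\{g,k\}}:=\mathbb{P}(G=g\mid G\in\{g,k\})$.) Convention: any product of a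 zero weight with a comparison whose denominator vanishes (or whose time window is empty) is taken to be zero. *)

(* Defs.v *)
From HB Require Import structures.
From mathcomp Require Import all_boot all_order all_algebra.
From mathcomp Require Import all_classical all_reals all_analysis.
Set Implicit Arguments. Unset Strict Implicit. Unset Printing Implicit Defensive.
Import Order.TTheory GRing.Theory Num.Theory.
Local Open Scope classical_set_scope.
Local Open Scope ring_scope.

(* Population quantities for ONE unit (a draw of the i.i.d. vector
   (Y_1..Y_T, D, G)) on a probability space P.  Real-valued expectation. *)
Definition Ex {d} {Om : measurableType d} {R : realType}
  (P : probability Om R) (X : Om -> R) : R := fine ('E_P[X])%E.

Definition Pr {d} {Om : measurableType d} {R : realType}
  (P : probability Om R) (A : set Om) : R := fine (P A).

Definition indG {Om} {R : realType} (G : Om -> nat) (g : nat) (w : Om) : R :=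
  if G w == g then 1 else 0.

Definition pg {d} {Om : measurableType d} {R : realType}
  (P : probability Om R) (G : Om -> nat) (g : nat) : R :=
  Pr P [set w | G w = g].

Definition cE {d} {Om : measurableType d} {R : realType}
  (P : probability Om R) (G : Om -> nat) (g : nat) (X : Om -> R) : R :=
  Ex P (fun w => X w * indG G g w) / pg P G g.

Definition cCov {d} {Om : measurableType d} {R : realType}
  (P : probability Om R) (G : Om -> nat) (g : nat) (X Z : Om -> R) : R :=
  cE P G g (fun w => (X w - cE P G g X) * (Z w - cE P G g Z)).

Definition cVar {d} {Om : measurableType d} {R : realType}
  (P : probability Om R) (G : Om -> nat) (g : nat) (X : Om -> R) : R :=
  cCov P G g X X.

Definition in_support {d} {Om : measurableType d} {R : realType}
  (P : probability Om R) (X : Om -> R) (x : R) : Prop :=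
  forall e : R, 0 < e -> 0 < Pr P [set w | `|X w - x| < e].

Definition in_csupport {d} {Om : measurableType d} {R : realType}
  (P : probability Om R) (G : Om -> nat) (g : nat) (X : Om -> R) (x : R) : Prop :=
  forall e : R, 0 < e -> 0 < Pr P [set w | `|X w - x| < e /\ G w = g].

Definition Wt {Om} {R : realType} (G : Om -> nat) (D : Om -> R) (t : nat) (w : Om) : R :=
  if (G w <= t)%N then D w else 0.

Definition Wbar {Om} {R : realType} (TT : nat) (G : Om -> nat) (D : Om -> R) (w : Om) : R :=
  (\sum_(1 <= t < TT.+1) Wt G D t w) / TT%:R.

Definition Wdd {d} {Om : measurableType d} {R : realType}
  (P : probability Om R) (TT : nat) (G : Om -> nat) (D : Om -> R) (t : nat) (w : Om) : R :=
  (Wt G D t w - Wbar TT G D w)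
  - (Ex P (Wt G D t) - (\sum_(1 <= s < TT.+1) Ex P (Wt G D s)) / TT%:R).

Definition Vtw {d} {Om : measurableType d} {R : realType}
  (P : probability Om R) (TT : nat) (G : Om -> nat) (D : Om -> R) : R :=
  (\sum_(1 <= t < TT.+1) Ex P (fun w => Wdd P TT G D t w ^+ 2)) / TT%:R.

Definition beta_twfe {d} {Om : measurableType d} {R : realType}
  (P : probability Om R) (TT : nat) (G : Om -> nat) (D : Om -> R)
  (Y : nat -> Om -> R) : R :=
  ((\sum_(1 <= t < TT.+1) Ex P (fun w => Y t w * Wdd P TT G D t w)) / TT%:R)
  / Vtw P TT G D.

Definition Yavg {Om} {R : realType} (Y : nat -> Om -> R) (t1 t2 : nat) (w : Om) : R :=
  (\sum_(t1 <= t < t2.+1) Y t w) / (t2.+1 - t1)%:R.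

Definition Ypre {Om} {R : realType} (Y : nat -> Om -> R) (g : nat) := Yavg Y 1 g.-1.
Definition Ymid {Om} {R : realType} (Y : nat -> Om -> R) (g k : nat) := Yavg Y g k.-1.
Definition Ypost {Om} {R : realType} (TT : nat) (Y : nat -> Om -> R) (k : nat) := Yavg Y k TT.

Definition Gbar {R : realType} (TT g : nat) : R := (TT.+1 - g)%:R / TT%:R.

Section comparisons.
Context {d} {Om : measurableType d} {R : realType} (P : probability Om R)
  (TT : nat) (G : Om -> nat) (D : Om -> R) (Y : nat -> Om -> R).

Definition delta_within (g : nat) : R :=
  cCov P G g (fun w => Ypost TT Y g w - Ypre Y g w) D / cVar P G g D.

Definition delta_mid_pre (g k : nat) : R :=
  (cE P G g (fun w => Ymid Y g k w - Ypre Y g w)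
   - cE P G k (fun w => Ymid Y g k w - Ypre Y g w)) / cE P G g D.

Definition delta_post_mid (g k : nat) : R :=
  (cE P G k (fun w => Ypost TT Y k w - Ymid Y g k w)
   - cE P G g (fun w => Ypost TT Y k w - Ymid Y g k w)) / cE P G k D.

Definition delta_post_pre (g k : nat) : R :=
  (cE P G g (fun w => Ypost TT Y k w - Ypre Y g w)
   - cE P G k (fun w => Ypost TT Y k w - Ypre Y g w)) / (cE P G g D - cE P G k D).

Definition w_within (g : nat) : R :=
  cVar P G g D * (1 - Gbar TT g) * Gbar TT g * pg P G g / Vtw P TT G D.

Definition w_gpost (g k : nat) : R :=
  cE P G g D ^+ 2 * (1 - Gbar TT g) * (Gbar TT g - Gbar TT k)
  * (pg P G g * pg P G k) / Vtw P TT G D.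

Definition w_kpost (g k : nat) : R :=
  cE P G k D ^+ 2 * Gbar TT k * (Gbar TT g - Gbar TT k)
  * (pg P G g * pg P G k) / Vtw P TT G D.

Definition w_long (g k : nat) : R :=
  (cE P G g D - cE P G k D) ^+ 2 * Gbar TT k * (1 - Gbar TT g)
  * (pg P G g * pg P G k) / Vtw P TT G D.

End comparisons.

(* Main.v *)
Require Import Defs.
From HB Require Import structures.
From mathcomp Require Import all_boot all_order all_algebra.
From mathcomp Require Import all_classical all_reals all_analysis.
From mathcomp Require Import ring lra zify measurable_realfun.
Import Order.TTheory GRing.Theory Num.Theory.
Local Open Scope classical_set_scope.
Local Open Scope ring_scope.


Section ExL.
Context {d} {Om : measurableType d} {R : realType} (P : probability Om R).
Notation L1 := (Lfun P 1).

Lemma Ex_add (X Y : Om -> R) : X \in L1 -> Y \in L1 ->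
  Ex P (fun w => X w + Y w) = Ex P X + Ex P Y.
Proof.
move=> hX hY; rewrite /Ex (expectationD hX hY) fineD //;
  exact: expectation_fin_num.
Qed.

Lemma Ex_scale (k : R) (X : Om -> R) : X \in L1 ->
  Ex P (fun w => k * X w) = k * Ex P X.
Proof.
move=> hX; rewrite /Ex (_ : (fun w => k * X w) = k \o* X) //.
rewrite (expectationZl _ hX) fineM //=; try exact: expectation_fin_num.
by apply/funext => w /=; rewrite mulrC.
Qed.

Lemma Ex_cst (c : R) : Ex P (fun _ => c) = c.
Proof. by rewrite /Ex (expectation_cst P c). Qed.

Lemma Ex_sum (I : Type) (s : seq I) (F : I -> Om -> R) :
  (forall i, F i \in L1) ->
  Ex P (fun w => \sum_(i <- s) F i w) = \sum_(i <- s) Ex P (F i).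
Proof.
move=> hF; elim: s => [|a s IH].
  by under eq_fun do rewrite big_nil; rewrite Ex_cst big_nil.
under eq_fun do rewrite big_cons.
rewrite Ex_add ?IH ?big_cons //.
have -> : (fun w => \sum_(i <- s) F i w) = \sum_(i <- s) F i.
  by apply/funext => w; rewrite fct_sumE.
by apply: rpred_sum.
Qed.

Lemma Ex_ge0 (X : Om -> R) : (forall w, 0 <= X w) -> 0 <= Ex P X.
Proof. by move=> h; rewrite /Ex fine_ge0 // expectation_ge0. Qed.

End ExL.


Section IntL.
Context {d} {Om : measurableType d} {R : realType} (P : probability Om R).
Notation L1 := (Lfun P 1).

Lemma indG_indic (G : Om -> nat) g : indG G g = \1_[set w | G w = g] :> (Om -> R).
Proof.
apply/funext => w; rewrite /indG indicE; case: eqP => h.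
  by rewrite mem_set.
by rewrite memNset.
Qed.

Lemma L1_meas (f : Om -> R) : f \in L1 -> measurable_fun setT f.
Proof. by case/andP; rewrite inE. Qed.

Lemma L1_ind (G : Om -> nat) g (f : Om -> R) :
  measurable [set w | G w = g] -> f \in L1 -> (fun w => f w * indG G g w) \in L1.
Proof.
move=> mA hf; apply/Lfun1_integrable.
have /Lfun1_integrable hi := hf.
apply: le_integrable hi => //.
  apply/measurable_EFinP; apply: measurable_funM; first exact: L1_meas.
  by rewrite indG_indic; exact: measurable_indic.
move=> w _ /=; rewrite lee_fin !normrM /indG; case: eqP => _.
  by rewrite normr1 mulr1.
by rewrite normr0 mulr0.
Qed.

Lemma L2_L1 (f : Om -> R) : f \in Lfun P 2%:E -> f \in L1.
Proof. by apply: Lfun_subset12; rewrite fin_num_measure. Qed.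

Lemma L2_mul (f g : Om -> R) : f \in Lfun P 2%:E -> g \in Lfun P 2%:E ->
  (fun w => f w * g w) \in L1.
Proof. exact: Lfun2_mul_Lfun1. Qed.

Lemma L1_cst (c : R) : (fun _ : Om => c) \in L1.
Proof. exact: Lfun_cst. Qed.

Lemma L1_add (f g : Om -> R) : f \in L1 -> g \in L1 -> (fun w => f w + g w) \in L1.
Proof. move=> hf hg; exact: (rpredD hf hg). Qed.

Lemma L1_scale (k : R) (f : Om -> R) : f \in L1 -> (fun w => k * f w) \in L1.
Proof. move=> hf; exact: (rpredZ k hf). Qed.

End IntL.


Section Alg.
Context {R : realType}.

Lemma pair_lemma (Gs : seq nat) (p x y : nat -> R) :
  \sum_(g <- Gs) p g = 1 ->
  \sum_(g <- Gs) p g * x g * y g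
    - (\sum_(g <- Gs) p g * x g) * (\sum_(g <- Gs) p g * y g)
  = \sum_(g <- Gs) \sum_(k <- Gs | (g < k)%N)
       p g * p k * ((x g - x k) * (y g - y k)).
Proof.
move=> hp.
set F := fun g k => p g * p k * ((x g - x k) * (y g - y k)).
set Sxy := \sum_(g <- Gs) p g * x g * y g.
set Sx := \sum_(g <- Gs) p g * x g.
set Sy := \sum_(g <- Gs) p g * y g.
have inner : forall g, \sum_(k <- Gs) F g k =
   p g * x g * y g * (\sum_(k <- Gs) p k) + p g * Sxy - p g * x g * Sy - Sx * (p g * y g).
  move=> g; rewrite /Sxy /Sx /Sy !big_distrr /= !big_distrl /=.
  rewrite -big_split -sumrB -sumrB /=.
  by apply: eq_bigr => k _; rewrite /F; ring.
have full : \sum_(g <- Gs) \sum_(k <- Gs) F g k = 2 * (Sxy - Sx * Sy).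
  under eq_bigr do rewrite inner hp.
  rewrite sumrB sumrB big_split /=.
  rewrite -(big_distrl Sxy) -(big_distrl Sy) -(big_distrr Sx) hp -/Sx -/Sy.
  have -> : \sum_(i <- Gs) p i * x i * y i * 1 = Sxy by apply: eq_bigr => i _; rewrite mulr1.
  change (Sxy + 1 * Sxy - Sx * Sy - Sx * Sy = 2 * (Sxy - Sx * Sy)); ring.
have split : forall g, \sum_(k <- Gs) F g k =
   \sum_(k <- Gs | (g < k)%N) F g k + \sum_(k <- Gs | (k < g)%N) F g k.
  move=> g; rewrite (bigID (fun k => (g < k)%N)) /=; congr (_ + _).
  rewrite (bigID (fun k => (k < g)%N)) /=.
  rewrite [X in _ + X]big1 ?addr0; last first.
    move=> k /andP [h1 h2]; have -> : k = g.
      by apply/eqP; rewrite eqn_leq -!leqNgt in h1 h2 *; rewrite h1 h2.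
    by rewrite /F !subrr mul0r mulr0.
  apply: eq_bigl => k; case: (ltnP k g) => h; rewrite ?andbT ?andbF //.
  by rewrite -leqNgt ltnW.
have swap : \sum_(g <- Gs) \sum_(k <- Gs | (k < g)%N) F g k =
            \sum_(g <- Gs) \sum_(k <- Gs | (g < k)%N) F g k.
  under eq_bigr do rewrite big_mkcond /=.
  rewrite exchange_big /=.
  apply: eq_bigr => g _; rewrite [RHS]big_mkcond /=.
  apply: eq_bigr => k _; case: ifP => // _.
  by rewrite /F; ring.
have : 2 * (Sxy - Sx * Sy) = 2 * \sum_(g <- Gs) \sum_(k <- Gs | (g < k)%N) F g k.
  rewrite -full; under eq_bigr do rewrite split.
  by rewrite big_split /= swap; ring.
move/(congr1 (fun z => z / 2)); rewrite ![2 * _]mulrC -!mulrA divff ?mulr1 //.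
Qed.

End Alg.


Definition ycoef {R : realType} (t1 t2 t : nat) : R :=
  ((t1 <= t) && (t <= t2))%N%:R / (t2.+1 - t1)%:R.
Definition aa {R : realType} (T g t : nat) : R := ((g <= t)%N)%:R - Gbar T g.

Section Alg2.
Context {R : realType}.

Lemma count_le (T g : nat) : (1 <= g)%N ->
  \sum_(1 <= t < T.+1) ((g <= t)%N)%:R = (T.+1 - g)%:R :> R.
Proof.
move=> g1; elim: T => [|T IH].
  by rewrite big_geq // (_ : (1 - g = 0)%N) //; apply/eqP; rewrite subn_eq0.
rewrite big_nat_recr //= IH -natrD; congr (_%:R).
case: (leqP g T.+1) => h /=; lia.
Qed.

Lemma natB1 {a b : nat} : (b <= a)%N -> (a - b)%:R = a%:R - b%:R :> R.
Proof. by move=> h; rewrite natrB. Qed.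

Lemma within_t (T g t : nat) : (1 <= t <= T)%N -> (2 <= g <= T.+1)%N ->
  (1 - Gbar T g) * Gbar T g * (ycoef g T t - ycoef 1 g.-1 t) = aa T g t / T%:R :> R.
Proof.
move=> /andP [t1 tT] /andP [g2 gT].
have T0 : T%:R != 0 :> R by rewrite pnatr_eq0; lia.
have e1 : (T.+1 - g)%:R = T%:R + 1 - g%:R :> R by rewrite natB1 // -addn1 natrD.
have e2 : (g.-1.+1 - 1)%:R = g%:R - 1 :> R by rewrite natB1; [rewrite prednK //; lia | lia].
have g1 : g%:R - 1 != 0 :> R by rewrite subr_eq0 pnatr_eq1; lia.
rewrite /ycoef /aa /Gbar e1 e2 t1 /=.
case: (leqP g t) => h /=.
  have -> : (t <= g.-1)%N = false by lia.
  rewrite tT /=.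
  have e : T%:R + 1 - g%:R != 0 :> R.
    by rewrite -e1 pnatr_eq0; lia.
  by field; rewrite T0 g1 e.
have -> : (t <= g.-1)%N = true by rewrite -ltnS prednK; lia.
rewrite /= mul0r; by field; rewrite T0 g1.
Qed.

Lemma pair_t (T g k t : nat) (x y : R) : (1 <= t <= T)%N -> (2 <= g)%N ->
  (g < k)%N -> (k <= T.+1)%N ->
  (aa T g t * x - aa T k t * y) / T%:R =
    x * (1 - Gbar T g) * (Gbar T g - Gbar T k) * (ycoef g k.-1 t - ycoef 1 g.-1 t)
  - y * Gbar T k * (Gbar T g - Gbar T k) * (ycoef k T t - ycoef g k.-1 t)
  + (x - y) * Gbar T k * (1 - Gbar T g) * (ycoef k T t - ycoef 1 g.-1 t).
Proof.
move=> /andP [t1 tT] g2 gk kT.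
have T0 : T%:R != 0 :> R by rewrite pnatr_eq0; lia.
have e1 : (T.+1 - g)%:R = T%:R + 1 - g%:R :> R by rewrite natB1; [rewrite -addn1 natrD // | lia].
have e3 : (T.+1 - k)%:R = T%:R + 1 - k%:R :> R by rewrite natB1 // -addn1 natrD.
have e2 : (g.-1.+1 - 1)%:R = g%:R - 1 :> R by rewrite natB1; [rewrite prednK //; lia | lia].
have e4 : (k.-1.+1 - g)%:R = k%:R - g%:R :> R by rewrite prednK; [rewrite natB1 //; lia | lia].
have g1 : g%:R - 1 != 0 :> R by rewrite subr_eq0 pnatr_eq1; lia.
have kg : k%:R - g%:R != 0 :> R by rewrite -e4 pnatr_eq0; lia.
rewrite /ycoef /aa /Gbar e1 e2 e3 e4 t1 /=.
case: (leqP g t) => h1.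
  case: (leqP k t) => h2.
    have -> : (t <= g.-1)%N = false by lia.
    have -> : (t <= k.-1)%N = false by lia.
    have e : T%:R + 1 - k%:R != 0 :> R by rewrite -e3 pnatr_eq0; lia.
    rewrite tT /= ?mul0r.
    by field; rewrite ?T0 ?g1 ?kg ?e.
  have -> : (t <= g.-1)%N = false by lia.
  have -> : (t <= k.-1)%N = true by rewrite -ltnS prednK; lia.
  rewrite /= ?mul0r.
  by field; rewrite ?T0 ?g1 ?kg.
have -> : (k <= t)%N = false by lia.
have -> : (t <= g.-1)%N = true by rewrite -ltnS prednK; lia.
rewrite /= ?mul0r.
by field; rewrite ?T0 ?g1 ?kg.
Qed.

Lemma GbarT (T g : nat) : (0 < T)%N -> (g <= T.+1)%N ->
  (T.+1 - g)%:R = T%:R * Gbar T g :> R.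
Proof.
move=> T0 gT; rewrite /Gbar mulrC -mulrA mulVf ?mulr1 //.
by rewrite pnatr_eq0; lia.
Qed.

Lemma var_within (T g : nat) : (0 < T)%N -> (1 <= g <= T.+1)%N ->
  (\sum_(1 <= t < T.+1) aa T g t ^+ 2) / T%:R = (1 - Gbar T g) * Gbar T g :> R.
Proof.
move=> T0 /andP [g1 gT].
have pt : forall t, aa T g t ^+ 2 =
   (g <= t)%N%:R * (1 - 2 * Gbar T g) + Gbar T g ^+ 2 :> R.
  by move=> t; rewrite /aa; case: (g <= t)%N => /=; ring.
under eq_bigr do rewrite pt.
rewrite big_split /= -big_distrl /= count_le // sumr_const_nat GbarT //.
rewrite subn1 /= -mulr_natl.
have TT : T%:R != 0 :> R by rewrite pnatr_eq0; lia.
by field.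
Qed.

Lemma var_pair (T g k : nat) (x y : R) : (0 < T)%N -> (1 <= g)%N -> (g < k)%N ->
  (k <= T.+1)%N ->
  (\sum_(1 <= t < T.+1) (aa T g t * x - aa T k t * y) ^+ 2) / T%:R =
   x ^+ 2 * (1 - Gbar T g) * (Gbar T g - Gbar T k) + y ^+ 2 * Gbar T k * (Gbar T g - Gbar T k)
   + (x - y) ^+ 2 * Gbar T k * (1 - Gbar T g).
Proof.
move=> T0 g1 gk kT.
set A := Gbar T g; set B := Gbar T k; set c := A * x - B * y.
have pt : forall t, (aa T g t * x - aa T k t * y) ^+ 2 =
   c ^+ 2 + (g <= t)%N%:R * ((x - c) ^+ 2 - c ^+ 2)
   + (k <= t)%N%:R * ((x - y - c) ^+ 2 - (x - c) ^+ 2) :> R.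
  move=> t; rewrite /aa -/A -/B /c.
  case: (leqP k t) => h2.
    have -> : (g <= t)%N = true by lia.
    by rewrite /=; ring.
  by case: (g <= t)%N => /=; ring.
under eq_bigr do rewrite pt.
rewrite !big_split /= -!big_distrl /= !count_le //; last by lia.
rewrite sumr_const_nat !GbarT //; last by lia.
rewrite subn1 /= -mulr_natl -/A -/B.
have TT : T%:R != 0 :> R by rewrite pnatr_eq0; lia.
rewrite /c; by field.
Qed.

Lemma avg_expand (f : nat -> R) (T t1 t2 : nat) : (1 <= t1)%N -> (t1 <= t2.+1)%N ->
  (t2 <= T)%N ->
  (\sum_(t1 <= t < t2.+1) f t) / (t2.+1 - t1)%:R =
  \sum_(1 <= t < T.+1) ycoef t1 t2 t * f t.
Proof.
move=> h1 h2 h3.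
rewrite [RHS](big_cat_nat (n := t1)); [|lia|lia].
rewrite /=.
rewrite [X in _ + X](big_cat_nat (n := t2.+1)); [|lia|lia].
rewrite /=.
have z1 : \sum_(1 <= i < t1) ycoef t1 t2 i * f i = 0.
  rewrite big1_seq // => t /= H1; rewrite ?mem_index_iota in H1.
  rewrite /ycoef (_ : (t1 <= t)%N = false) ?mul0r //; lia.
have z2 : \sum_(t2.+1 <= i < T.+1) ycoef t1 t2 i * f i = 0.
  rewrite big1_seq // => t /= H1; rewrite ?mem_index_iota in H1.
  rewrite /ycoef (_ : (t <= t2)%N = false) ?andbF /= ?mul0r //; lia.
rewrite z1 z2 add0r addr0 big_distrl /=; apply: eq_big_seq => t; rewrite mem_index_iota => h.
rewrite /ycoef (_ : ((t1 <= t) && (t <= t2))%N = true) /=; last by lia.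
by rewrite mul1r mulrC.
Qed.

End Alg2.


Section Core.
Context {R : realType}.

Lemma core_beta (T : nat) (Gs : seq nat) (p m : nat -> R) (mu A : nat -> nat -> R) :
  (0 < T)%N -> \sum_(g <- Gs) p g = 1 ->
  (forall g, g \in Gs -> p g != 0) ->
  (forall g, g \in Gs -> (2 <= g <= T.+1)%N) ->
  (\sum_(1 <= t < T.+1) (\sum_(g <- Gs) aa T g t * A g t
      - (\sum_(g <- Gs) aa T g t * (p g * m g)) * (\sum_(g <- Gs) p g * mu g t))) / T%:R
  = \sum_(g <- Gs) (1 - Gbar T g) * Gbar T g * p g *
       ((\sum_(1 <= t < T.+1) (ycoef g T t - ycoef 1 g.-1 t) * (A g t - m g * (p g * mu g t))) / p g)
  + \sum_(g <- Gs) \sum_(k <- Gs | (g < k)%N)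
     (m g * (1 - Gbar T g) * (Gbar T g - Gbar T k) * (p g * p k) *
        (\sum_(1 <= t < T.+1) (ycoef g k.-1 t - ycoef 1 g.-1 t) * mu g t
         - \sum_(1 <= t < T.+1) (ycoef g k.-1 t - ycoef 1 g.-1 t) * mu k t)
    + m k * Gbar T k * (Gbar T g - Gbar T k) * (p g * p k) *
        (\sum_(1 <= t < T.+1) (ycoef k T t - ycoef g k.-1 t) * mu k t
         - \sum_(1 <= t < T.+1) (ycoef k T t - ycoef g k.-1 t) * mu g t)
    + (m g - m k) * Gbar T k * (1 - Gbar T g) * (p g * p k) *
        (\sum_(1 <= t < T.+1) (ycoef k T t - ycoef 1 g.-1 t) * mu g t
         - \sum_(1 <= t < T.+1) (ycoef k T t - ycoef 1 g.-1 t) * mu k t)).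
Proof.
move=> T0 hp hp0 hG.
have TT : T%:R != 0 :> R by rewrite pnatr_eq0 -lt0n.
have W : \sum_(g <- Gs) (1 - Gbar T g) * Gbar T g * p g *
       ((\sum_(1 <= t < T.+1) (ycoef g T t - ycoef 1 g.-1 t) * (A g t - m g * (p g * mu g t))) / p g)
   = \sum_(g <- Gs) \sum_(1 <= t < T.+1) (aa T g t * A g t
        - aa T g t * m g * (p g * mu g t)) / T%:R.
  apply: eq_big_seq => g hg.
  have cp : forall c X, c * p g * (X / p g) = c * X.
    by move=> c X; field; rewrite hp0.
  rewrite cp big_distrr /=.
  apply: eq_big_nat => t ht.
  have := @within_t R T g t ht (hG g hg).
  move=> E; rewrite mulrA E; field; done.
have Pp : forall g k, g \in Gs -> k \in Gs -> (g < k)%N ->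
   (m g * (1 - Gbar T g) * (Gbar T g - Gbar T k) * (p g * p k) *
        (\sum_(1 <= t < T.+1) (ycoef g k.-1 t - ycoef 1 g.-1 t) * mu g t
         - \sum_(1 <= t < T.+1) (ycoef g k.-1 t - ycoef 1 g.-1 t) * mu k t)
    + m k * Gbar T k * (Gbar T g - Gbar T k) * (p g * p k) *
        (\sum_(1 <= t < T.+1) (ycoef k T t - ycoef g k.-1 t) * mu k t
         - \sum_(1 <= t < T.+1) (ycoef k T t - ycoef g k.-1 t) * mu g t)
    + (m g - m k) * Gbar T k * (1 - Gbar T g) * (p g * p k) *
        (\sum_(1 <= t < T.+1) (ycoef k T t - ycoef 1 g.-1 t) * mu g t
         - \sum_(1 <= t < T.+1) (ycoef k T t - ycoef 1 g.-1 t) * mu k t))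
   = \sum_(1 <= t < T.+1) (p g * p k * ((aa T g t * m g - aa T k t * m k) * (mu g t - mu k t))) / T%:R.
  move=> g k hg hk gk.
  rewrite -!sumrB !big_distrr /= -!big_split /=.
  apply: eq_big_nat => t ht.
  have /andP [g2 _] := hG g hg; have /andP [_ kT] := hG k hk.
  have E := @pair_t R T g k t (m g) (m k) ht g2 gk kT.
  set x := m g; set y := m k.
  set X := aa T g t * x - aa T k t * y.
  have -> : p g * p k * (X * (mu g t - mu k t)) / T%:R = p g * p k * (mu g t - mu k t) * (X / T%:R).
    by rewrite /X; field.
  rewrite /X E /x /y; ring.
have Q : \sum_(g <- Gs) \sum_(k <- Gs | (g < k)%N)
     (m g * (1 - Gbar T g) * (Gbar T g - Gbar T k) * (p g * p k) *
        (\sum_(1 <= t < T.+1) (ycoef g k.-1 t - ycoef 1 g.-1 t) * mu g t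
         - \sum_(1 <= t < T.+1) (ycoef g k.-1 t - ycoef 1 g.-1 t) * mu k t)
    + m k * Gbar T k * (Gbar T g - Gbar T k) * (p g * p k) *
        (\sum_(1 <= t < T.+1) (ycoef k T t - ycoef g k.-1 t) * mu k t
         - \sum_(1 <= t < T.+1) (ycoef k T t - ycoef g k.-1 t) * mu g t)
    + (m g - m k) * Gbar T k * (1 - Gbar T g) * (p g * p k) *
        (\sum_(1 <= t < T.+1) (ycoef k T t - ycoef 1 g.-1 t) * mu g t
         - \sum_(1 <= t < T.+1) (ycoef k T t - ycoef 1 g.-1 t) * mu k t))
  = (\sum_(1 <= t < T.+1) \sum_(g <- Gs) \sum_(k <- Gs | (g < k)%N)
       (p g * p k * ((aa T g t * m g - aa T k t * m k) * (mu g t - mu k t)))) / T%:R.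
  rewrite [RHS]big_distrl /=.
  under [RHS]eq_bigr do rewrite big_distrl /=.
  rewrite [RHS]exchange_big /=.
  apply: eq_big_seq => g hg.
  under [RHS]eq_bigr do rewrite big_distrl /=.
  rewrite [RHS]exchange_big /=.
  rewrite big_seq_cond [RHS]big_seq_cond; apply: eq_bigr => k /andP [hk gk].
  by rewrite Pp // big_distrl.
rewrite W Q.
have ex1 : \sum_(g <- Gs) \sum_(1 <= t < T.+1) (aa T g t * A g t
        - aa T g t * m g * (p g * mu g t)) / T%:R
   = (\sum_(1 <= t < T.+1) \sum_(g <- Gs) (aa T g t * A g t
        - aa T g t * m g * (p g * mu g t))) / T%:R.
  rewrite exchange_big [RHS]big_distrl /=; apply: eq_bigr => t _.
  by rewrite big_distrl.
rewrite ex1 -mulrDl -big_split /=; congr (_ / _).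
apply: eq_bigr => t _.
rewrite sumrB.
have := pair_lemma Gs p (fun g => aa T g t * m g) (fun g => mu g t) hp.
move=> <-.
have -> : \sum_(g <- Gs) aa T g t * (p g * m g) = \sum_(g <- Gs) p g * (aa T g t * m g).
  by apply: eq_bigr => g _; ring.
have -> : \sum_(g <- Gs) aa T g t * m g * (p g * mu g t) = \sum_(g <- Gs) p g * (aa T g t * m g) * mu g t.
  by apply: eq_bigr => g _; ring.
ring.
Qed.

End Core.

Section Core2.
Context {R : realType}.

Lemma core_var (T : nat) (Gs : seq nat) (p m S : nat -> R) :
  (0 < T)%N -> \sum_(g <- Gs) p g = 1 ->
  (forall g, g \in Gs -> p g != 0) ->
  (forall g, g \in Gs -> (2 <= g <= T.+1)%N) ->
  (\sum_(1 <= t < T.+1) \sum_(g <- Gs)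
      (aa T g t ^+ 2 * S g
       - 2 * aa T g t * (\sum_(h <- Gs) aa T h t * (p h * m h)) * (p g * m g)
       + (\sum_(h <- Gs) aa T h t * (p h * m h)) ^+ 2 * p g)) / T%:R
  = \sum_(g <- Gs) (S g / p g - m g ^+ 2) * (1 - Gbar T g) * Gbar T g * p g
  + \sum_(g <- Gs) \sum_(k <- Gs | (g < k)%N)
     (m g ^+ 2 * (1 - Gbar T g) * (Gbar T g - Gbar T k) * (p g * p k)
    + m k ^+ 2 * Gbar T k * (Gbar T g - Gbar T k) * (p g * p k)
    + (m g - m k) ^+ 2 * Gbar T k * (1 - Gbar T g) * (p g * p k)).
Proof.
move=> T0 hp hp0 hG.
have TT : T%:R != 0 :> R by rewrite pnatr_eq0 -lt0n.
have step : forall t, \sum_(g <- Gs)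
      (aa T g t ^+ 2 * S g
       - 2 * aa T g t * (\sum_(h <- Gs) aa T h t * (p h * m h)) * (p g * m g)
       + (\sum_(h <- Gs) aa T h t * (p h * m h)) ^+ 2 * p g)
   = \sum_(g <- Gs) aa T g t ^+ 2 * (S g - p g * m g ^+ 2)
     + \sum_(g <- Gs) \sum_(k <- Gs | (g < k)%N)
        p g * p k * ((aa T g t * m g - aa T k t * m k) * (aa T g t * m g - aa T k t * m k)).
  move=> t.
  rewrite -(pair_lemma Gs p (fun g => aa T g t * m g) (fun g => aa T g t * m g) hp).
  set c := \sum_(h <- Gs) aa T h t * (p h * m h).
  have ec : \sum_(g <- Gs) p g * (aa T g t * m g) = c.
    by apply: eq_bigr => g _; ring.
  rewrite ec.
  have e1 : forall cc, \sum_(g <- Gs)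
      (aa T g t ^+ 2 * S g - 2 * aa T g t * cc * (p g * m g) + cc ^+ 2 * p g)
    = \sum_(g <- Gs) aa T g t ^+ 2 * S g - (2 * cc) * (\sum_(h <- Gs) aa T h t * (p h * m h))
      + cc ^+ 2 * \sum_(g <- Gs) p g.
    move=> cc; rewrite !mulr_sumr -sumrB -big_split /=.
    by apply: eq_bigr => g _; ring.
  rewrite e1 hp.
  have e2 : \sum_(g <- Gs) aa T g t ^+ 2 * (S g - p g * m g ^+ 2)
     = \sum_(g <- Gs) aa T g t ^+ 2 * S g
       - \sum_(g <- Gs) p g * (aa T g t * m g) * (aa T g t * m g).
    rewrite -sumrB; apply: eq_bigr => g _; ring.
  rewrite e2 -/c; ring.
under eq_bigr do rewrite step.
rewrite big_split /= mulrDl.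
congr (_ + _).
  rewrite exchange_big /= big_distrl /=; apply: eq_big_seq => g hg.
  have /andP [g2 gT] := hG g hg.
  have VW := @var_within R T g T0 (_ : (1 <= g <= T.+1)%N).
  rewrite -mulr_suml mulrAC VW; last by lia.
  by field; rewrite hp0.
rewrite [LHS]big_distrl /=.
under eq_bigr do rewrite big_distrl /=.
rewrite exchange_big /=; apply: eq_big_seq => g hg.
under eq_bigr do rewrite big_distrl /=.
rewrite exchange_big /= big_seq_cond [RHS]big_seq_cond.
apply: eq_bigr => k /andP [hk gk].
rewrite -big_distrl /= -mulr_sumr -mulrA.
have /andP [g2 gT] := hG g hg; have /andP [k2 kT] := hG k hk.
under eq_bigr do rewrite -expr2.
rewrite (@var_pair R T g k _ _ T0 (_ : (1 <= g)%N) gk kT); last by lia.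
ring.
Qed.

End Core2.


Section Main.
Context {d : measure_display} {Om : measurableType d} {R : realType}
  (P : probability Om R) (TT : nat) (Gs : seq nat) (G : Om -> nat) (D : Om -> R)
  (Y : nat -> Om -> R).
Hypothesis HT : (0 < TT)%N.
Hypothesis HGs_uniq : uniq Gs.
Hypothesis HGs_range : forall g, g \in Gs -> (2 <= g <= TT.+1)%N.
Hypothesis HG_in : forall w, G w \in Gs.
Hypothesis HGs_pos : forall g, g \in Gs -> 0 < pg P G g.
Hypothesis HG_meas : forall g, measurable [set w | G w = g].
Hypothesis HY2 : forall t, Y t \in Lfun P 2%:E.
Hypothesis HD2 : D \in Lfun P 2%:E.

Notation L1 := (Lfun P 1).
Notation L2 := (Lfun P 2%:E).

Lemma decomp (F : nat -> R) w : F (G w) = \sum_(g <- Gs) F g * indG G g w.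
Proof.
rewrite (bigD1_seq (G w)) //= /indG eqxx mulr1 big1 ?addr0 // => g hg.
by rewrite eq_sym (negbTE hg) mulr0.
Qed.

Lemma pgE g : pg P G g = Ex P (indG G g).
Proof.
by rewrite /pg /Pr /Ex indG_indic expectation_indic.
Qed.

Lemma ind_L1 g : indG G g \in L1.
Proof.
have := L1_ind P G g _ (HG_meas g) (L1_cst P 1).
by rewrite (_ : (fun w => 1 * indG G g w) = indG G g) //; apply/funext => w; rewrite mul1r.
Qed.

Lemma sum_p : \sum_(g <- Gs) pg P G g = 1.
Proof.
under eq_bigr do rewrite pgE.
rewrite -Ex_sum; last exact: ind_L1.
rewrite -(Ex_cst P 1); congr (Ex P _); apply/funext => w.
by rewrite (decomp (fun _ => 1) w); apply: eq_bigr => g _; rewrite mul1r.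
Qed.

Lemma p_neq0 g : g \in Gs -> pg P G g != 0.
Proof. by move=> hg; rewrite gt_eqF // HGs_pos. Qed.

Lemma L2_ind (f : Om -> R) g : f \in L2 -> (fun w => f w * indG G g w) \in L1.
Proof. by move=> hf; apply: (L1_ind P G g _ (HG_meas g)); exact: L2_L1. Qed.

Lemma L22_ind (f h : Om -> R) g : f \in L2 -> h \in L2 ->
  (fun w => f w * h w * indG G g w) \in L1.
Proof. move=> hf hh; exact: (L1_ind P G g _ (HG_meas g) (L2_mul P _ _ hf hh)). Qed.

Lemma cE_sum (c : nat -> R) g :
  cE P G g (fun w => \sum_(1 <= t < TT.+1) c t * Y t w)
  = \sum_(1 <= t < TT.+1) c t * cE P G g (Y t).
Proof.
rewrite /cE.
have -> : Ex P (fun w => (\sum_(1 <= t < TT.+1) c t * Y t w) * indG G g w)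
   = \sum_(1 <= t < TT.+1) c t * Ex P (fun w => Y t w * indG G g w).
  rewrite (_ : (fun w => (\sum_(1 <= t < TT.+1) c t * Y t w) * indG G g w)
     = (fun w => \sum_(1 <= t < TT.+1) c t * (Y t w * indG G g w))); last first.
    apply/funext => w; rewrite big_distrl /=; apply: eq_bigr => t _; ring.
  rewrite Ex_sum; last by move=> t; apply: L1_scale; exact: L2_ind.
  apply: eq_bigr => t _; rewrite Ex_scale //; exact: L2_ind.
rewrite big_distrl /=; apply: eq_bigr => t _; ring.
Qed.

Lemma Ypost_exp g w : (1 <= g <= TT.+1)%N ->
  Ypost TT Y g w = \sum_(1 <= t < TT.+1) ycoef g TT t * Y t w.
Proof. move=> /andP [h1 h2]; exact: (avg_expand (fun t => Y t w)). Qed.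

Lemma Ypre_exp g w : (2 <= g <= TT.+1)%N ->
  Ypre Y g w = \sum_(1 <= t < TT.+1) ycoef 1 g.-1 t * Y t w.
Proof. move=> /andP [h1 h2]; apply: (avg_expand (fun t => Y t w)); lia. Qed.

Lemma Ymid_exp g k w : (1 <= g)%N -> (g < k)%N -> (k <= TT.+1)%N ->
  Ymid Y g k w = \sum_(1 <= t < TT.+1) ycoef g k.-1 t * Y t w.
Proof. move=> h1 h2 h3; apply: (avg_expand (fun t => Y t w)); lia. Qed.

Lemma sum_diff (c1 c2 : nat -> R) w :
  \sum_(1 <= t < TT.+1) c1 t * Y t w - \sum_(1 <= t < TT.+1) c2 t * Y t w
  = \sum_(1 <= t < TT.+1) (c1 t - c2 t) * Y t w.
Proof. by rewrite -sumrB; apply: eq_bigr => t _; rewrite mulrBl. Qed.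

Lemma Wt_pt t w : Wt G D t w = ((G w <= t)%N)%:R * D w.
Proof. by rewrite /Wt; case: (G w <= t)%N; rewrite ?mul1r ?mul0r. Qed.

Lemma Wbar_pt w : Wbar TT G D w = Gbar TT (G w) * D w.
Proof.
have /andP [g2 _] := HGs_range _ (HG_in w).
rewrite /Wbar /Gbar; under eq_bigr do rewrite Wt_pt.
rewrite -big_distrl /= count_le; last by lia.
by rewrite mulrAC.
Qed.

Definition MD g := Ex P (fun w => D w * indG G g w).
Definition ct t := Ex P (Wt G D t) - (\sum_(1 <= s < TT.+1) Ex P (Wt G D s)) / TT%:R.

Lemma Wdd_pt t w : Wdd P TT G D t w = aa TT (G w) t * D w - ct t.
Proof. by rewrite /Wdd Wt_pt Wbar_pt /aa /ct; ring. Qed.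

Lemma DL1 g : (fun w => D w * indG G g w) \in L1.
Proof. exact: L2_ind. Qed.

Lemma Ex_Wt t : Ex P (Wt G D t) = \sum_(g <- Gs) ((g <= t)%N)%:R * MD g.
Proof.
rewrite (_ : Wt G D t = fun w => \sum_(g <- Gs) ((g <= t)%N)%:R * (D w * indG G g w)).
  rewrite Ex_sum; last by move=> g; apply: L1_scale; exact: DL1.
  by apply: eq_bigr => g _; rewrite Ex_scale //; exact: DL1.
apply/funext => w; rewrite Wt_pt (decomp (fun g => ((g <= t)%N)%:R * D w) w).
by apply: eq_bigr => g _; ring.
Qed.

Lemma ct_val t : ct t = \sum_(g <- Gs) aa TT g t * MD g.
Proof.
have E : \sum_(1 <= s < TT.+1) Ex P (Wt G D s)
   = \sum_(1 <= s < TT.+1) \sum_(g <- Gs) ((g <= s)%N)%:R * MD g.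
  by apply: eq_bigr => s _; exact: Ex_Wt.
rewrite /ct E Ex_Wt.
rewrite exchange_big /= big_distrl /= -sumrB.
apply: eq_big_seq => g hg.
have /andP [g2 _] := HGs_range _ hg.
rewrite -big_distrl /= count_le; last by lia.
by rewrite /aa /Gbar; ring.
Qed.

Lemma Ex_lin2 (a b : R) (X Z : Om -> R) : X \in L1 -> Z \in L1 ->
  Ex P (fun w => a * X w + b * Z w) = a * Ex P X + b * Ex P Z.
Proof.
move=> hX hZ; rewrite Ex_add ?Ex_scale //; exact: L1_scale.
Qed.

Lemma Ex_lin3 (a b c : R) (X Z U : Om -> R) : X \in L1 -> Z \in L1 -> U \in L1 ->
  Ex P (fun w => a * X w + b * Z w + c * U w) = a * Ex P X + b * Ex P Z + c * Ex P U.
Proof.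
move=> hX hZ hU; rewrite Ex_add.
- by rewrite Ex_lin2 // Ex_scale.
- by apply: L1_add; apply: L1_scale.
- exact: L1_scale.
Qed.

Definition AY g t := Ex P (fun w => Y t w * D w * indG G g w).
Definition EY g t := Ex P (fun w => Y t w * indG G g w).
Definition SD g := Ex P (fun w => D w * D w * indG G g w).

Lemma num_t t : Ex P (fun w => Y t w * Wdd P TT G D t w)
  = \sum_(g <- Gs) aa TT g t * AY g t - ct t * \sum_(g <- Gs) EY g t.
Proof.
rewrite (_ : (fun w => Y t w * Wdd P TT G D t w) = fun w => \sum_(g <- Gs)
    (aa TT g t * (Y t w * D w * indG G g w) + (- ct t) * (Y t w * indG G g w))).
  rewrite Ex_sum; last first.
    by move=> g; apply: L1_add; apply: L1_scale; [exact: L22_ind | exact: L2_ind].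
  rewrite mulr_sumr -sumrB; apply: eq_bigr => g _.
  rewrite Ex_lin2; [| exact: L22_ind | exact: L2_ind].
  by rewrite /AY /EY; ring.
apply/funext => w; rewrite Wdd_pt.
rewrite (decomp (fun g => Y t w * (aa TT g t * D w - ct t)) w).
by apply: eq_bigr => g _; ring.
Qed.

Lemma V_t t : Ex P (fun w => Wdd P TT G D t w ^+ 2)
  = \sum_(g <- Gs) (aa TT g t ^+ 2 * SD g - 2 * aa TT g t * ct t * MD g
                    + ct t ^+ 2 * pg P G g).
Proof.
rewrite (_ : (fun w => Wdd P TT G D t w ^+ 2) = fun w => \sum_(g <- Gs)
    (aa TT g t ^+ 2 * (D w * D w * indG G g w) + (- (2 * aa TT g t * ct t)) * (D w * indG G g w)
     + ct t ^+ 2 * indG G g w)).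
  rewrite Ex_sum; last first.
    move=> g; apply: L1_add; [apply: L1_add|]; apply: L1_scale;
      [exact: L22_ind | exact: L2_ind | exact: ind_L1].
  apply: eq_bigr => g _.
  rewrite Ex_lin3; [| exact: L22_ind | exact: L2_ind | exact: ind_L1].
  by rewrite /SD /MD pgE; ring.
apply/funext => w; rewrite Wdd_pt.
rewrite (decomp (fun g => (aa TT g t * D w - ct t) ^+ 2) w).
by apply: eq_bigr => g _; ring.
Qed.

Lemma L2_subc (f : Om -> R) (c : R) : f \in L2 -> (fun w => f w - c) \in L2.
Proof.
move=> hf; have hc : (fun _ : Om => c) \in L2 by exact: (Lfun_cst P c 2).
have := rpredB hf hc; move=> /(_ (lee1n 2)) h; exact: h.
Qed.

Lemma CS g (Zf : Om -> R) : g \in Gs -> Zf \in L2 -> cVar P G g D = 0 -> cCov P G g Zf D = 0.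
Proof.
move=> hg hZ hV.
set z := cE P G g Zf; set m := cE P G g D.
have hZ' := L2_subc _ z hZ; have hD' := L2_subc _ m HD2.
set Z' := fun w => Zf w - z; set D' := fun w => D w - m.
set a := Ex P (fun w => Z' w * Z' w * indG G g w).
set b := Ex P (fun w => Z' w * D' w * indG G g w).
set v := Ex P (fun w => D' w * D' w * indG G g w).
have p0 := p_neq0 _ hg.
have v0 : v = 0.
  move: hV; rewrite /cVar /cCov /cE -/m => /eqP; rewrite mulf_eq0 invr_eq0 (negbTE p0) orbF.
  by move/eqP.
have key : forall l, 0 <= a + 2 * l * b + l ^+ 2 * v.
  move=> l.
  have E : Ex P (fun w => (Z' w + l * D' w) * (Z' w + l * D' w) * indG G g w)
     = a + 2 * l * b + l ^+ 2 * v.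
    rewrite (_ : (fun w => (Z' w + l * D' w) * (Z' w + l * D' w) * indG G g w)
      = fun w => 1 * (Z' w * Z' w * indG G g w) + (2 * l) * (Z' w * D' w * indG G g w)
                 + l ^+ 2 * (D' w * D' w * indG G g w)).
      by rewrite Ex_lin3 ?mul1r //; exact: L22_ind.
    by apply/funext => w; ring.
  rewrite -E; apply: Ex_ge0 => w; apply: mulr_ge0; first by rewrite -expr2 sqr_ge0.
  by rewrite /indG; case: eqP.
have b0 : b = 0.
  apply/eqP; apply/negPn/negP => hb.
  have := key (- (a + 1) / (2 * b)); rewrite v0 mulr0 addr0.
  have -> : 2 * (- (a + 1) / (2 * b)) * b = - (a + 1).
    by field; rewrite hb.
  move=> H; move: H; rewrite opprD addrA subrr add0r oppr_ge0 ler10 //.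
by rewrite /cCov /cE -/z -/m; rewrite (_ : Ex P _ = b) ?b0 ?mul0r.
Qed.

Lemma L2_add (f h : Om -> R) : f \in L2 -> h \in L2 -> (fun w => f w + h w) \in L2.
Proof. move=> hf hh; have := rpredD hf hh; move=> /(_ (lee1n 2)); exact. Qed.

Lemma L2_scale (k : R) (f : Om -> R) : f \in L2 -> (fun w => k * f w) \in L2.
Proof. move=> hf; have := rpredZ k hf; move=> /(_ (lee1n 2)); exact. Qed.

Lemma L2_sumY (c : nat -> R) (s : seq nat) : (fun w => \sum_(t <- s) c t * Y t w) \in L2.
Proof.
elim: s => [|a s IH].
  rewrite (_ : (fun w => \sum_(t <- [::]) c t * Y t w) = (fun _ => 0)).
    exact: (Lfun_cst P 0 2).
  by apply/funext => w; rewrite big_nil.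
rewrite (_ : (fun w => \sum_(t <- a :: s) c t * Y t w)
   = (fun w => c a * Y a w + \sum_(t <- s) c t * Y t w)).
  by apply: L2_add => //; apply: L2_scale.
by apply/funext => w; rewrite big_cons.
Qed.

Lemma MD_pm g : g \in Gs -> MD g = pg P G g * cE P G g D.
Proof. by move=> hg; rewrite /cE /MD; field; rewrite p_neq0. Qed.

Lemma EY_pm g t : g \in Gs -> EY g t = pg P G g * cE P G g (Y t).
Proof. by move=> hg; rewrite /cE /EY; field; rewrite p_neq0. Qed.

Lemma cVar_val g : g \in Gs -> cVar P G g D = SD g / pg P G g - cE P G g D ^+ 2.
Proof.
move=> hg; rewrite /cVar /cCov {1}/cE.
set m := cE P G g D.
rewrite (_ : (fun w => (D w - m) * (D w - m) * indG G g w) = fun w =>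
   1 * (D w * D w * indG G g w) + (- (2 * m)) * (D w * indG G g w) + m ^+ 2 * indG G g w).
  rewrite Ex_lin3; [| exact: L22_ind | exact: L2_ind | exact: ind_L1].
  rewrite -/(SD g) -/(MD g) -pgE MD_pm // -/m.
  by field; rewrite p_neq0.
by apply/funext => w; ring.
Qed.

Lemma Ex_sumY_ind (c : nat -> R) (s : seq nat) g (H : Om -> R) : H \in L2 ->
  Ex P (fun w => (\sum_(t <- s) c t * Y t w) * H w * indG G g w)
  = \sum_(t <- s) c t * Ex P (fun w => Y t w * H w * indG G g w).
Proof.
move=> hH.
rewrite (_ : (fun w => (\sum_(t <- s) c t * Y t w) * H w * indG G g w)
   = fun w => \sum_(t <- s) c t * (Y t w * H w * indG G g w)).
  rewrite Ex_sum; last by move=> t; apply: L1_scale; exact: L22_ind.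
  by apply: eq_bigr => t _; rewrite Ex_scale //; exact: L22_ind.
by apply/funext => w; rewrite !big_distrl /=; apply: eq_bigr => t _; ring.
Qed.

Lemma cCov_val g (c : nat -> R) : g \in Gs ->
  cCov P G g (fun w => \sum_(1 <= t < TT.+1) c t * Y t w) D
  = (\sum_(1 <= t < TT.+1) c t * (AY g t - cE P G g D * EY g t)) / pg P G g.
Proof.
move=> hg; rewrite /cCov {1}/cE.
set Zf := fun w => \sum_(1 <= t < TT.+1) c t * Y t w.
set z := cE P G g Zf; set m := cE P G g D.
have hZ : Zf \in L2 by exact: L2_sumY.
have one : (fun _ : Om => 1) \in L2 by exact: (Lfun_cst P 1 2).
rewrite (_ : (fun w => (Zf w - z) * (D w - m) * indG G g w) = fun w =>
   (1 * (Zf w * D w * indG G g w) + (- m) * (Zf w * 1 * indG G g w)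
    + (- z) * (D w * indG G g w)) + (z * m) * indG G g w).
  rewrite Ex_add; last first.
  - by apply: L1_scale; exact: ind_L1.
  - apply: L1_add; [apply: L1_add|]; apply: L1_scale;
      [exact: L22_ind | exact: L22_ind | exact: L2_ind].
  rewrite Ex_lin3; [| exact: L22_ind | exact: L22_ind | exact: L2_ind].
  rewrite Ex_scale; last exact: ind_L1.
  rewrite -pgE -/(MD g) MD_pm // -/m.
  have hz : z = Ex P (fun w => Zf w * 1 * indG G g w) / pg P G g.
    rewrite /z /cE; congr (Ex P _ / _); apply/funext => w; ring.
  rewrite hz /Zf !Ex_sumY_ind //.
  rewrite /AY /EY.
  under [X in _ = X / _]eq_bigr do rewrite mulrBr.
  rewrite sumrB.
  have e : \sum_(1 <= t < TT.+1) c t * Ex P (fun w => Y t w * 1 * indG G g w)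
      = \sum_(1 <= t < TT.+1) c t * Ex P (fun w => Y t w * indG G g w).
    by apply: eq_bigr => t _; congr (_ * Ex P _); apply/funext => w; ring.
  rewrite e.
  have e2 : \sum_(1 <= i < TT.+1) c i * (m * Ex P (fun w => Y i w * indG G g w))
     = m * \sum_(1 <= i < TT.+1) c i * Ex P (fun w => Y i w * indG G g w).
    by rewrite mulr_sumr; apply: eq_bigr => i _; ring.
  rewrite e2; field; by rewrite p_neq0.
by apply/funext => w; ring.
Qed.

Lemma prodw (a b c e f V : R) :
  a ^+ 2 * b * c * e / V * (f / a) = a * b * c * e * f / V.
Proof.
have [->|a0] := eqVneq a 0; first by rewrite expr0n /= !mul0r.
have [->|V0] := eqVneq V 0; first by rewrite invr0 !(mul0r, mulr0).
by rewrite expr2; field; rewrite V0 a0.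
Qed.

Lemma prodv (v b c e cov V : R) : (v = 0 -> cov = 0) ->
  v * b * c * e / V * (cov / v) = b * c * e * cov / V.
Proof.
move=> h; have [v0|v0] := eqVneq v 0.
  by rewrite v0 (h v0) !(mul0r, mulr0).
have [->|V0] := eqVneq V 0; first by rewrite invr0 !(mul0r, mulr0).
by field; rewrite V0 v0.
Qed.

Lemma Gbar_ge0 g : 0 <= Gbar TT g :> R.
Proof. by rewrite /Gbar divr_ge0. Qed.

Lemma Gbar_le1 g : (1 <= g)%N -> Gbar TT g <= 1 :> R.
Proof.
move=> g1; rewrite /Gbar ler_pdivrMr ?mul1r ?ltr0n // ler_nat; lia.
Qed.

Lemma Gbar_mono g k : (g <= k)%N -> Gbar TT k <= Gbar TT g :> R.
Proof.
move=> gk; rewrite /Gbar ler_pM2r ?invr_gt0 ?ltr0n // ler_nat; lia.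
Qed.

Lemma pg_ge0 g : 0 <= pg P G g.
Proof. by rewrite /pg /Pr fine_ge0 // measure_ge0. Qed.

Lemma cVar_ge0 g : g \in Gs -> 0 <= cVar P G g D.
Proof.
move=> hg; rewrite /cVar /cCov /cE divr_ge0 ?pg_ge0 //.
apply: Ex_ge0 => w; apply: mulr_ge0; first by rewrite -expr2 sqr_ge0.
by rewrite /indG; case: eqP.
Qed.

Lemma fun_within g : g \in Gs ->
  (fun w => Ypost TT Y g w - Ypre Y g w)
  = fun w => \sum_(1 <= t < TT.+1) (ycoef g TT t - ycoef 1 g.-1 t) * Y t w.
Proof.
move=> hg; have /andP [g2 gT] := HGs_range _ hg.
apply/funext => w; rewrite Ypost_exp ?Ypre_exp ?sum_diff //; apply/andP; split => //; lia.
Qed.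

Lemma fun_mp g k : g \in Gs -> k \in Gs -> (g < k)%N ->
  (fun w => Ymid Y g k w - Ypre Y g w)
  = fun w => \sum_(1 <= t < TT.+1) (ycoef g k.-1 t - ycoef 1 g.-1 t) * Y t w.
Proof.
move=> hg hk gk; have /andP [g2 gT] := HGs_range _ hg; have /andP [k2 kT] := HGs_range _ hk.
apply/funext => w; rewrite Ymid_exp ?Ypre_exp ?sum_diff //; try lia.
Qed.

Lemma fun_pm g k : g \in Gs -> k \in Gs -> (g < k)%N ->
  (fun w => Ypost TT Y k w - Ymid Y g k w)
  = fun w => \sum_(1 <= t < TT.+1) (ycoef k TT t - ycoef g k.-1 t) * Y t w.
Proof.
move=> hg hk gk; have /andP [g2 gT] := HGs_range _ hg; have /andP [k2 kT] := HGs_range _ hk.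
apply/funext => w; rewrite Ypost_exp ?Ymid_exp ?sum_diff //; try lia.
Qed.

Lemma fun_pp g k : g \in Gs -> k \in Gs -> (g < k)%N ->
  (fun w => Ypost TT Y k w - Ypre Y g w)
  = fun w => \sum_(1 <= t < TT.+1) (ycoef k TT t - ycoef 1 g.-1 t) * Y t w.
Proof.
move=> hg hk gk; have /andP [g2 gT] := HGs_range _ hg; have /andP [k2 kT] := HGs_range _ hk.
apply/funext => w; rewrite Ypost_exp ?Ypre_exp ?sum_diff //; apply/andP; split => //; lia.
Qed.

Hypothesis HV : 0 < Vtw P TT G D.

Lemma part_beta : beta_twfe P TT G D Y =
    \sum_(g <- Gs) w_within P TT G D g * delta_within P TT G D Y g
    + \sum_(g <- Gs) \sum_(k <- Gs | (g < k)%N)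
        (w_gpost P TT G D g k * delta_mid_pre P G D Y g k
         + w_kpost P TT G D g k * delta_post_mid P TT G D Y g k
         + w_long P TT G D g k * delta_post_pre P TT G D Y g k).
Proof.
have V0 : Vtw P TT G D != 0 by rewrite gt_eqF.
have numE : \sum_(1 <= t < TT.+1) Ex P (fun w => Y t w * Wdd P TT G D t w)
   = \sum_(1 <= t < TT.+1) (\sum_(g <- Gs) aa TT g t * AY g t
      - (\sum_(g <- Gs) aa TT g t * (pg P G g * cE P G g D))
        * (\sum_(g <- Gs) pg P G g * cE P G g (Y t))).
  apply: eq_bigr => t _; rewrite num_t ct_val; congr (_ - _ * _);
    apply: eq_big_seq => g hg; [rewrite MD_pm | rewrite EY_pm] => //.
have C := core_beta TT Gs (pg P G) (fun g => cE P G g D) (fun g t => cE P G g (Y t)) AY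
   HT sum_p p_neq0 HGs_range.
rewrite /beta_twfe numE C mulrDl; congr (_ + _).
  rewrite big_distrl /=; apply: eq_big_seq => g hg.
  rewrite /w_within /delta_within fun_within //.
  rewrite prodv; last by apply: CS => //; exact: L2_sumY.
  rewrite cCov_val //; congr (_ * (_ / _) / _).
  by apply: eq_bigr => t _; rewrite EY_pm.
rewrite big_distrl /=; apply: eq_big_seq => g hg.
rewrite big_distrl /= big_seq_cond [RHS]big_seq_cond; apply: eq_bigr => k /andP [hk gk].
rewrite /w_gpost /w_kpost /w_long /delta_mid_pre /delta_post_mid /delta_post_pre.
rewrite !prodw fun_mp // fun_pm // fun_pp // !cE_sum.
by rewrite -!mulrDl.
Qed.

Lemma part_sum :
  \sum_(g <- Gs) w_within P TT G D g
     + \sum_(g <- Gs) \sum_(k <- Gs | (g < k)%N)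
         (w_gpost P TT G D g k + w_kpost P TT G D g k + w_long P TT G D g k)
     = 1.
Proof.
have V0 : Vtw P TT G D != 0 by rewrite gt_eqF.
have VE : Vtw P TT G D =
  (\sum_(1 <= t < TT.+1) \sum_(g <- Gs)
      (aa TT g t ^+ 2 * SD g
       - 2 * aa TT g t * (\sum_(h <- Gs) aa TT h t * (pg P G h * cE P G h D)) * (pg P G g * cE P G g D)
       + (\sum_(h <- Gs) aa TT h t * (pg P G h * cE P G h D)) ^+ 2 * pg P G g)) / TT%:R.
  rewrite /Vtw; congr (_ / _); apply: eq_bigr => t _.
  rewrite V_t ct_val.
  have -> : \sum_(h <- Gs) aa TT h t * MD h = \sum_(h <- Gs) aa TT h t * (pg P G h * cE P G h D).
    by apply: eq_big_seq => h hh; rewrite MD_pm.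
  by apply: eq_big_seq => g hg; rewrite MD_pm.
have C := core_var TT Gs (pg P G) (fun g => cE P G g D) SD HT sum_p p_neq0 HGs_range.
have E1 : \sum_(g <- Gs) w_within P TT G D g =
   (\sum_(g <- Gs) (SD g / pg P G g - cE P G g D ^+ 2) * (1 - Gbar TT g) * Gbar TT g * pg P G g)
   / Vtw P TT G D.
  by rewrite big_distrl; apply: eq_big_seq => g hg; rewrite /w_within cVar_val.
have E2 : \sum_(g <- Gs) \sum_(k <- Gs | (g < k)%N)
         (w_gpost P TT G D g k + w_kpost P TT G D g k + w_long P TT G D g k)
   = (\sum_(g <- Gs) \sum_(k <- Gs | (g < k)%N)
     (cE P G g D ^+ 2 * (1 - Gbar TT g) * (Gbar TT g - Gbar TT k) * (pg P G g * pg P G k)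
    + cE P G k D ^+ 2 * Gbar TT k * (Gbar TT g - Gbar TT k) * (pg P G g * pg P G k)
    + (cE P G g D - cE P G k D) ^+ 2 * Gbar TT k * (1 - Gbar TT g) * (pg P G g * pg P G k)))
   / Vtw P TT G D.
  rewrite big_distrl; apply: eq_bigr => g _; rewrite big_distrl; apply: eq_bigr => k _.
  by rewrite /w_gpost /w_kpost /w_long -!mulrDl.
rewrite E1 E2 -mulrDl -C -VE divff //.
Qed.

Lemma part_nn1 g : g \in Gs -> 0 <= w_within P TT G D g.
Proof.
move=> hg; have /andP [g2 _] := HGs_range _ hg.
rewrite /w_within; apply: divr_ge0; last exact: ltW HV.
apply: mulr_ge0; last exact: pg_ge0.
apply: mulr_ge0; last exact: Gbar_ge0.
apply: mulr_ge0; first exact: cVar_ge0.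
rewrite subr_ge0 Gbar_le1 //; lia.
Qed.

Lemma part_nn2 g k : g \in Gs -> k \in Gs -> (g < k)%N ->
  0 <= w_gpost P TT G D g k /\ 0 <= w_kpost P TT G D g k /\ 0 <= w_long P TT G D g k.
Proof.
move=> hg hk gk; have /andP [g2 _] := HGs_range _ hg.
have h1 : 0 <= 1 - Gbar TT g :> R by rewrite subr_ge0 Gbar_le1 //; lia.
have h2 : 0 <= Gbar TT g - Gbar TT k :> R by rewrite subr_ge0 Gbar_mono // ltnW.
have h3 : 0 <= pg P G g * pg P G k by rewrite mulr_ge0 ?pg_ge0.
have nn4 : forall a b c e : R, 0 <= b -> 0 <= c -> 0 <= e ->
   0 <= a ^+ 2 * b * c * e / Vtw P TT G D.
  move=> a b c e hb hc he; apply: divr_ge0; last exact: ltW HV.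
  by apply: mulr_ge0 => //; apply: mulr_ge0 => //; apply: mulr_ge0 => //; exact: sqr_ge0.
by split; [|split]; apply: nn4 => //; exact: Gbar_ge0.
Qed.

End Main.

Theorem proposition5
  (d : measure_display) (Om : measurableType d) (R : realType)
  (P : probability Om R) (TT : nat)
  (Gs : seq nat) (Dplus : set R)
  (G : Om -> nat) (D : Om -> R)
  (Ypo : nat -> nat -> R -> Om -> R) (* Y_t(g,d) *)
  (Y : nat -> Om -> R) (* observed Y_t *)
  (* setup *)
  (HT : (0 < TT)%N)
  (HGs_uniq : uniq Gs)
  (HGs_range : forall g, g \in Gs -> (2 <= g <= TT.+1)%N)
  (HG_in : forall w, G w \in Gs)
  (HGs_pos : forall g, g \in Gs -> 0 < pg P G g)
  (HG_meas : forall g, measurable [set w | G w = g])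
  (HD_nonneg : forall w, 0 <= D w)
  (HD0 : forall w, D w = 0 <-> G w = TT.+1)
  (HY_obs : forall t w, Y t w = if (t < G w)%N then Ypo t TT.+1 0 w
                                else Ypo t (G w) (D w) w)
  (* finite second moments *)
  (HY2 : forall t, Y t \in Lfun P 2%:E)
  (HD2 : D \in Lfun P 2%:E)
  (* 2-MP(a) *)
  (HDplus : forall x, Dplus x -> 0 < x)
  (HsuppD : forall x, in_support P D x <-> (x = 0 \/ Dplus x))
  (HPD0 : 0 < Pr P [set w | D w = 0])
  (HcsuppD : forall g, g \in Gs -> (g <= TT)%N ->
               forall x, Dplus x -> in_csupport P G g D x)
  (* 3-MP *)
  (Hnoanti : forall t g (x : R) w, (t < g)%N -> Ypo t g x w = Ypo t TT.+1 0 w)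
  (Hstag : forall w, Wt G D 1 w = 0 /\
             forall t (x : R), (2 <= t <= TT)%N -> Dplus x ->
               Wt G D t.-1 w = x -> Wt G D t w = x)
  (HV : 0 < Vtw P TT G D) :
  beta_twfe P TT G D Y =
    \sum_(g <- Gs) w_within P TT G D g * delta_within P TT G D Y g
    + \sum_(g <- Gs) \sum_(k <- Gs | (g < k)%N)
        (w_gpost P TT G D g k * delta_mid_pre P G D Y g k
         + w_kpost P TT G D g k * delta_post_mid P TT G D Y g k
         + w_long P TT G D g k * delta_post_pre P TT G D Y g k)
  /\ (forall g, g \in Gs -> 0 <= w_within P TT G D g)
  /\ (forall g k, g \in Gs -> k \in Gs -> (g < k)%N ->
        0 <= w_gpost P TT G D g k /\ 0 <= w_kpost P TT G D g k
        /\ 0 <= w_long P TT G D g k)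
  /\ \sum_(g <- Gs) w_within P TT G D g
     + \sum_(g <- Gs) \sum_(k <- Gs | (g < k)%N)
         (w_gpost P TT G D g k + w_kpost P TT G D g k + w_long P TT G D g k)
     = 1.
Proof.
split; first by apply: part_beta.
split; first by move=> g hg; exact: (part_nn1 P TT Gs G D HT HGs_uniq HGs_range HD2 HV g hg).
split; first by move=> g k hg hk gk; exact: (part_nn2 P TT Gs G D HT HGs_uniq HGs_range HD2 HV g k hg hk gk).
by apply: part_sum.
Qed.
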